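(* Let $(V,E)$ be a finite graph with $E\neq\emptyset$ and let $p\in(0,1)$. Let $(\eta_t,\sigma_t)_{t\ge0}$ be a continuous-time Markov jump process on $\{0,1\}^E\times\{-1,1\}^V$ which updates at most one site or one edge at each time (i.e. its rates $q((\eta,\sigma),(\eta',\sigma'))$ vanish unless $(\eta',\sigma')$ differs from $(\eta,\sigma)$ in at most one spin or at most one edge), and whose spin marginal $(\sigma_t)_{t\ge0}$ is a Markov jump process with transition rates $c(\sigma,\sigma')$ satisfying: $c(\sigma,\sigma')=0$ whenever $\sigma,\sigma'$ differ at two or more vertices, $c(\sigma,\sigma^x)>0$ for all $x\in V$, and $c(\sigma,\sigma)=-\sum_{y\in V}c(\sigma,\sigma^y)$. Then $(\eta_t,\sigma_t)_{t\ge0}$ cannot be reversible with respect to $IP$.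
   Context: Edge configurations $\eta\in\{0,1\}^E$, spin configurations $\sigma\in\{-1,1\}^V$. For $e=\langle x,y\rangle$, $\delta_\sigma(e)=\mathbf 1_{\sigma(x)=\sigma(y)}$. $IP(\eta,\sigma)=\frac1Z\prod_{e\in E}\big(p\mathbf 1_{\eta(e)=1}\delta_\sigma(e)+(1-p)\mathbf 1_{\eta(e)=0}\big)$ with $Z$ the normalizing constant. $\sigma^x$ is $\sigma$ with the spin at $x$ flipped. Reversibility with respect to $IP$ means $IP(a)q(a,b)=IP(b)q(b,a)$ for all states $a,b$. The spin marginal is a Markov jump process with rates $c$ if it is a time-homogeneous Markov process for every initial distribution, with rates $c$ not depending on the initial distribution. *)

(* Defs.v *)
From HB Require Import structures.
From mathcomp Require Import all_boot all_order all_algebra.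
From mathcomp Require Import all_classical all_reals all_analysis.

Set Implicit Arguments.
Unset Strict Implicit.
Unset Printing Implicit Defensive.
Import Order.TTheory GRing.Theory Num.Theory.
Import numFieldNormedType.Exports.
Local Open Scope ring_scope.

Section Defs.
Variable R : realType.

Definition rate_matrix (T : finType) (q : T -> T -> R) : Prop :=
  (forall a b, a != b -> 0 <= q a b) /\
  (forall a, q a a = - \sum_(b | b != a) q a b).

Fixpoint qpow (T : finType) (q : T -> T -> R) (k : nat) : T -> T -> R :=
  match k with
  | 0 => fun a b => (a == b)%:R
  | k'.+1 => fun a b => \sum_(c : T) qpow q k' a c * q c b
  end.

Definition semigroup (T : finType) (q : T -> T -> R) (t : R) (a b : T) : R :=
  limn (series (fun k : nat => t ^+ k / (k`!)%:R * qpow q k a b)).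

Definition distribution (T : finType) (mu : T -> R) : Prop :=
  (forall a, 0 <= mu a) /\ \sum_(a : T) mu a = 1.

(* Given a Markov jump process X with rates q started at state a at time 0,
   and a function f : T -> U of the state, [obs_fdd q f a L] with
   L = [:: (d_1,u_1); ...; (d_n,u_n)] is the probability that
   f(X_{t_i}) = u_i for all i, where t_i = d_1 + ... + d_i. *)
Fixpoint obs_fdd (T U : finType) (q : T -> T -> R) (f : T -> U) (a : T)
    (L : seq (R * U)) : R :=
  match L with
  | [::] => 1
  | (d, u) :: L' => \sum_(b | f b == u) semigroup q d a b * obs_fdd q f b L'
  end.

Definition fdd (U : finType) (c : U -> U -> R) (s : U) (L : seq (R * U)) : R :=
  obs_fdd c id s L.

(* "f(X) is a time-homogeneous Markov jump process with rates c, for every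
   initial distribution of X, with c independent of the initial distribution":
   for every initial law mu of X_0, all times 0 = t_0 <= t_1 <= ... <= t_n
   (given through their nonnegative increments d_i) and values u_0,...,u_n,
   P_mu(f(X_0)=u_0, f(X_{t_1})=u_1, ..., f(X_{t_n})=u_n)
     = P_mu(f(X_0)=u_0) * prod_i P^c_{d_i}(u_{i-1},u_i). *)
Definition marginal_markov_with_rates (T U : finType) (q : T -> T -> R)
    (f : T -> U) (c : U -> U -> R) : Prop :=
  forall mu : T -> R, distribution mu ->
  forall (u0 : U) (L : seq (R * U)), all (fun x => 0 <= x.1) L ->
    \sum_(a | f a == u0) mu a * obs_fdd q f a L
    = (\sum_(a | f a == u0) mu a) * fdd c u0 L.

Definition reversible (T : finType) (pi : T -> R) (q : T -> T -> R) : Prop :=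
  forall a b, pi a * q a b = pi b * q b a.

Definition simple_graph (V E : finType) (src dst : E -> V) : Prop :=
  (forall e, src e != dst e) /\
  (forall e e', ((src e == src e') && (dst e == dst e')) ||
                ((src e == dst e') && (dst e == src e')) -> e = e').

(* Spins are encoded by bool: true = +1, false = -1.
   Edge variables: true = 1 (open), false = 0 (closed). *)
Definition state (V E : finType) : finType :=
  ({ffun E -> bool} * {ffun V -> bool})%type.

Definition delta (V E : finType) (src dst : E -> V) (sigma : {ffun V -> bool})
    (e : E) : bool := sigma (src e) == sigma (dst e).

Definition ES_weight (V E : finType) (src dst : E -> V) (p : R)
    (st : state V E) : R :=
  \prod_(e : E)
     (p * ((st.1 e) && delta src dst st.2 e)%:R + (1 - p) * (~~ st.1 e)%:R).

Definition IP (V E : finType) (src dst : E -> V) (p : R) (st : state V E) : R :=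
  ES_weight src dst p st / \sum_(st' : state V E) ES_weight src dst p st'.

Definition flip (V : finType) (sigma : {ffun V -> bool}) (x : V)
  : {ffun V -> bool} := [ffun y => if y == x then ~~ sigma y else sigma y].

Definition ndiff (I : finType) (f g : {ffun I -> bool}) : nat :=
  #|[set i | f i != g i]|.

Definition single_update (V E : finType) (q : state V E -> state V E -> R)
  : Prop :=
  forall a b : state V E,
    ~ ((a.1 = b.1 /\ (ndiff a.2 b.2 <= 1)%N) \/
       (a.2 = b.2 /\ (ndiff a.1 b.1 <= 1)%N)) ->
    q a b = 0.

End Defs.

(* Main.v *)
Require Import Defs.
From HB Require Import structures.
From mathcomp Require Import all_boot all_order all_algebra.
From mathcomp Require Import all_classical all_reals all_analysis.
From mathcomp Require Import ring lra.
Import Order.TTheory GRing.Theory Num.Theory.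
Import numFieldNormedType.Exports.
Local Open Scope ring_scope.

Section Aux.
Variable R : realType.
Variable T : finType.
Variable q : T -> T -> R.

Let M : R := 1 + \sum_(a : T) \sum_(b : T) `|q a b|.

Lemma M_ge1 : 1 <= M.
Proof. by rewrite /M lerDl; apply: sumr_ge0 => a _; apply: sumr_ge0. Qed.

Lemma col_bound b : \sum_(c : T) `|q c b| <= M.
Proof.
apply: le_trans (_ : \sum_(c : T) \sum_(b' : T) `|q c b'| <= M).
  apply: ler_sum => c _; rewrite (bigD1 b) //= lerDl.
  by apply: sumr_ge0.
by rewrite /M lerDr.
Qed.

Lemma qpow_bound k a b : `|qpow q k a b| <= M ^+ k.
Proof.
elim: k a b => [|k IH] a b /=.
  by rewrite expr0; case: (a == b); rewrite ?normr1 ?normr0.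
apply: le_trans (ler_norm_sum _ _ _) _.
apply: le_trans (_ : \sum_c M ^+ k * `|q c b| <= _).
  apply: ler_sum => c _; rewrite normrM; apply: ler_wpM2r => //.
rewrite -mulr_sumr exprSr; apply: ler_wpM2l; last exact: col_bound.
by apply: exprn_ge0; apply: le_trans M_ge1.
Qed.

Lemma geom_tail (r : R) n : 0 <= r -> 2 * r <= 1 ->
  \sum_(2 <= k < n.+2) r ^+ k <= 2 * r ^+ 2 - 2 * r ^+ n.+2.
Proof.
move=> r0 r1; elim: n => [|n IH].
  by rewrite big_geq // subrr.
rewrite big_nat_recr //=.
have x0 : 0 <= r ^+ n.+2 by apply: exprn_ge0.
rewrite [r ^+ n.+3]exprSr.
set x := r ^+ n.+2 in IH x0 *.
have : x * (1 - 2 * r) >= 0 by apply: mulr_ge0; lra.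
lra.
Qed.

Lemma semigroup_expand : exists K t0 : R, 0 <= K /\ 0 < t0 /\
  forall t, 0 <= t -> t <= t0 -> forall a b,
  `|semigroup q t a b - (a == b)%:R - t * q a b| <= K * t ^+ 2.
Proof.
have M0 : 0 < M by apply: lt_le_trans M_ge1.
exists (2 * M ^+ 2), (2 * M)^-1; split; first by rewrite mulr_ge0 // exprn_ge0 // ltW.
split; first by rewrite invr_gt0 mulr_gt0.
move=> t t0 tle a b.
set u := fun k : nat => t ^+ k / (k`!)%:R * qpow q k a b.
set r := t * M.
have r0 : 0 <= r by rewrite mulr_ge0 // ltW.
have r1 : 2 * r <= 1.
  have h2M : 0 <= 2 * M by rewrite mulr_ge0 // ltW.
  have := ler_wpM2r h2M tle; rewrite mulVf ?gt_eqF ?mulr_gt0 // /r => h; lra.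
have ub : forall k, `|u k| <= r ^+ k.
  move=> k; rewrite /u normrM ger0_norm; last first.
    by rewrite divr_ge0 // exprn_ge0.
  rewrite /r exprMn; apply: ler_pM => //.
  - by rewrite divr_ge0 // exprn_ge0.
  - rewrite ler_pdivrMr ?ltr0n ?fact_gt0 // ler_peMr ?exprn_ge0 //.
    by rewrite ler1n fact_gt0.
  - exact: qpow_bound.
have cv : cvgn (series u).
  apply: normed_cvg.
  apply: (@series_le_cvg _ _ (geometric 1 r)).
  - by move=> n; exact: normr_ge0.
  - by move=> n; apply: geometric_ge0.
  - by move=> n /=; rewrite mul1r.
  apply/cvg_ex; exists (1 * (1 - r)^-1).
  by apply: cvg_geometric_series; rewrite ger0_norm //; lra.
have part : forall n, `|series u n.+2 - ((a == b)%:R + t * q a b)| <= 2 * M ^+ 2 * t ^+ 2.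
  move=> n.
  have -> : series u n.+2 = u 0%N + u 1%N + \sum_(2 <= k < n.+2) u k.
    by rewrite /series /= big_ltn // big_ltn // addrA.
  have -> : u 0%N = (a == b)%:R by rewrite /u /= expr0 div1r invr1 mul1r.
  have -> : u 1%N = t * q a b.
    rewrite /u /= expr1 divr1; congr (_ * _).
    rewrite (bigD1 a) //= eqxx mul1r big1 ?addr0 // => c /negbTE.
    by rewrite eq_sym => ->; rewrite mul0r.
  rewrite addrAC subrr add0r.
  apply: le_trans (ler_norm_sum _ _ _) _.
  apply: le_trans (_ : \sum_(2 <= k < n.+2) r ^+ k <= _).
    by apply: ler_sum => k _; apply: ub.
  apply: le_trans (@geom_tail r n r0 r1) _.
  have : 0 <= 2 * r ^+ n.+2 by rewrite mulr_ge0 // exprn_ge0.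
  by rewrite /r exprMn; lra.
rewrite /semigroup -/u.
set C := _ + _ in part *.
rewrite -addrA -opprD -/C ler_distl; apply/andP; split.
  apply: limr_ge => //; exists 2%N => // n /= n2.
  have := part (n - 2)%N; rewrite -addn2 subnK // ler_distl.
  by case/andP.
apply: limr_le => //; exists 2%N => // n /= n2.
have := part (n - 2)%N; rewrite -addn2 subnK // ler_distl.
by case/andP.
Qed.

Lemma sum_ind (U : finType) (P : pred U) (a : U) (F : U -> R) :
  P a -> \sum_(st | P st) (st == a)%:R * F st = F a.
Proof.
move=> Pa; rewrite (bigD1 a) //= eqxx mul1r big1 ?addr0 //.
by move=> st /andP[_ /negbTE ->]; rewrite mul0r.
Qed.

Lemma sum_ind1 (U : finType) (P : pred U) (a : U) :
  P a -> \sum_(st | P st) (st == a)%:R = 1 :> R.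
Proof.
move=> Pa; rewrite (bigD1 a) //= eqxx big1 ?addr0 //.
by move=> st /andP[_ /negbTE ->].
Qed.
End Aux.

Theorem theorem2 (R : realType) (V E : finType) (src dst : E -> V)
  (hG : simple_graph src dst) (hE : (0 < #|E|)%N)
  (p : R) (hp0 : 0 < p) (hp1 : p < 1)
  (q : state V E -> state V E -> R) (hq : rate_matrix q)
  (hloc : single_update q)
  (c : {ffun V -> bool} -> {ffun V -> bool} -> R)
  (hc2 : forall s s', (2 <= ndiff s s')%N -> c s s' = 0)
  (hcpos : forall s x, 0 < c s (flip s x))
  (hcdiag : forall s, c s s = - \sum_(y : V) c s (flip s y))
  (hmarg : marginal_markov_with_rates q (fun st : state V E => st.2) c) :
  ~ reversible (IP src dst p) q.
Proof.
move=> hrev.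
case/card_gt0P: hE => e _.
set s0 : {ffun V -> bool} := [ffun _ => true].
set e0 : {ffun E -> bool} := [ffun _ => true].
set a : state V E := (e0, s0).
set u := flip s0 (src e).
set b : state V E := (e0, u).
have hsd : dst e != src e by rewrite eq_sym; exact: hG.1 e.
have hu : u != s0.
  apply/eqP => h; have := congr1 (fun f : {ffun V -> bool} => f (src e)) h.
  by rewrite /u /flip /s0 !ffunE eqxx.
have hw0 : forall st, 0 <= ES_weight src dst p st.
  move=> st; apply: prodr_ge0 => e' _; apply: addr_ge0; apply: mulr_ge0 => //.
  - exact: ltW.
  - by rewrite subr_ge0 ltW.
have wa : 0 < ES_weight src dst p a.
  apply: prodr_gt0 => e' _.
  by rewrite /a /= /e0 /delta /s0 !ffunE /= mulr1 mulr0 addr0.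
have Z0 : 0 < \sum_st ES_weight src dst p st.
  apply: lt_le_trans wa _; rewrite (bigD1 a) //= lerDl.
  by apply: sumr_ge0 => st _; apply: hw0.
have IPa : 0 < IP src dst p a by apply: divr_gt0.
have IPb : IP src dst p b = 0.
  rewrite /IP /ES_weight (bigD1 e) //= /delta /b /e0 /u /flip /s0 !ffunE /=.
  by rewrite eqxx (negbTE hsd) /= mulr0 mulr0 addr0 !mul0r.
have qab : q a b = 0.
  have := hrev a b; rewrite IPb mul0r => /eqP; rewrite mulf_eq0 (gt_eqF IPa) /=.
  by move/eqP.
have qa0 : forall b', b'.2 == u -> q a b' = 0.
  case=> [et st] /= /eqP ->.
  case: (eqVneq et e0) => [->|ne]; first exact: qab.
  apply: hloc => /= -[[h _]|[h _]].
    by rewrite h eqxx in ne.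
  by rewrite h eqxx in hu.
have ha0 : forall b', b'.2 == u -> (a == b') = false.
  move=> b' /eqP hb; apply/negbTE/eqP => h; rewrite -h /= in hb.
  by rewrite hb eqxx in hu.
have keyeq : forall t, 0 <= t ->
    \sum_(b' | b'.2 == u) semigroup q t a b' = semigroup c t s0 u.
  move=> t ht.
  have hd : @Defs.distribution R _ (fun st : state V E => (st == a)%:R).
    split => [st|]; first exact: ler0n.
    rewrite (bigD1 a) //= eqxx big1 ?addr0 // => st /negbTE ->.
    by [].
  have := @hmarg _ hd s0 [:: (t, u)]; rewrite /= ht => /(_ isT).
  rewrite (@sum_ind _ _ _ a) // (@sum_ind1 _ _ _ a) //.
  rewrite mul1r /fdd /= big_pred1_eq mulr1.
  by under eq_bigr do rewrite mulr1.
have [K1 [t1 [K1g [t1g h1]]]] := @semigroup_expand R _ q.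
have [K2 [t2 [K2g [t2g h2]]]] := @semigroup_expand R _ c.
have hc0 : 0 < c s0 u by apply: hcpos.
set c0 := c s0 u in hc0.
set N := \sum_(b' : state V E | b'.2 == u) K1.
have Ng : 0 <= N by apply: sumr_ge0.
set K := N + K2.
have Kg : 0 <= K by apply: addr_ge0.
have key : forall t, 0 < t -> t <= t1 -> t <= t2 -> c0 * t <= K * t ^+ 2.
  move=> t tp t1' t2'.
  have eqt := keyeq t (ltW tp).
  have hL : `|\sum_(b' | b'.2 == u) semigroup q t a b'| <= N * t ^+ 2.
    apply: le_trans (ler_norm_sum _ _ _) _.
    rewrite /N mulr_suml; apply: ler_sum => b' hb'.
    have := h1 t (ltW tp) t1' a b'.
    by rewrite ha0 // qa0 // mulr0 !subr0.
  have hR := h2 t (ltW tp) t2' s0 u.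
  rewrite eq_sym (negbTE hu) subr0 -eqt -/c0 in hR.
  move: hL hR; rewrite !ler_norml.
  set S := \sum_(b' | _) _.
  rewrite /K; lra.
set d := c0 / (2 * (K + 1)).
have dp : 0 < d by rewrite divr_gt0 // mulr_gt0 // ltr_pwDr.
have dd : c0 = 2 * K * d + 2 * d.
  have -> : 2 * K * d + 2 * d = d * (2 * (K + 1)) by ring.
  by rewrite /d divfK // gt_eqF // mulr_gt0 // ltr_pwDr.
set t := Num.min (Num.min t1 t2) d.
have tp : 0 < t by rewrite !lt_min t1g t2g dp.
have tt1 : t <= t1 by rewrite /t !ge_min lexx.
have tt2 : t <= t2 by rewrite /t !ge_min lexx orbT.
have td : t <= d by rewrite /t ge_min lexx orbT.
have := key t tp tt1 tt2.
rewrite expr2 mulrA ler_pM2r // => hK.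
have : K * t <= K * d by apply: ler_wpM2l.
lra.
Qed.
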